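(* Let $\sigma$ be a 2-structure and $X\subsetneq V(\sigma)$ with $\sigma[X]$ prime; write $\overline{X}=V(\sigma)\setminus X$. Suppose Statement (S1) holds, i.e. there is no $v\in\overline{X}$ with $\sigma[X\cup\{v\}]$ prime. Let $M\subseteq\overline{X}$. If $M$ is a module of $\sigma$, then $M$ is a module of the outside graph $\Gamma_{(\sigma,\overline{X})}$, and there exist $B_p\in p_{(\sigma,\overline{X})}$ and $B_q\in q_{(\sigma,\overline{X})}$ such that $M\subseteq B_q\subseteq B_p$ and $M$ is a module of $\sigma[B_p]$.
   Context: A 2-structure $\sigma$ consists of a vertex set $V(\sigma)$ and an equivalence relation $\equiv_\sigma$ on ordered pairs of distinct vertices; $E(\sigma)$ is its set of classes; $\sigma[W]$ is the induced 2-structure on $W$. A module is a set $M$ such that for all $x,y\in M$ and $v\notin M$, $(x,v)\equiv_\sigma(y,v)$ and $(v,x)\equiv_\sigma(v,y)$; $\sigma$ is prime if $|V(\sigma)|\geq3$ and its only modules are $\emptyset$, $V(\sigma)$ and singletons. A graph is viewed as a 2-structure where $(u,v)\equiv(x,y)$ iff both pairs are edges or both non-edges (so a module of a graph is a vertex set $M$ such that each outside vertex is adjacent to all or none of $M$). Given $\sigma[X]$ prime: ${\rm Ext}_\sigma(X)=\{v\in\overline{X}:\sigma[X\cup\{v\}]\text{ prime}\}$; $\langle X\rangle_\sigma=\{v\in\overline{X}: X\text{ is a module of }\sigma[X\cup\{v\}]\}$; for $\alpha\in X$, $X_\sigma(\alpha)=\{v\in\overline{X}:\{\alpha,v\}\text{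 is a module of }\sigma[X\cup\{v\}]\}$. $p_{(\sigma,\overline{X})}$ is the partition of $\overline{X}$ formed by the nonempty sets among ${\rm Ext}_\sigma(X)$, $\langle X\rangle_\sigma$, $X_\sigma(\alpha)$ ($\alpha\in X$). For $e,f\in E(\sigma)$: $\langle X\rangle^{(e,f)}_\sigma=\{v\in\langle X\rangle_\sigma:(v,\alpha)\in e,(\alpha,v)\in f\}$ for any $\alpha\in X$; $X^{(e,f)}_\sigma(\alpha)=\{v\in X_\sigma(\alpha):(v,\alpha)\in e,(\alpha,v)\in f\}$. $q_{(\sigma,\overline{X})}$ is the partition of $\overline{X}$ formed by the nonempty sets among ${\rm Ext}_\sigma(X)$, $\langle X\rangle^{(e,f)}_\sigma$, $X^{(e,f)}_\sigma(\alpha)$ ($e,f\in E(\sigma)$, $\alpha\in X$). The outside graph $\Gamma_{(\sigma,\overline{X})}$ has vertex set $\overline{X}$ and edges the 2-element sets $Y\subseteq\overline{X}$ with $\sigma[X\cup Y]$ prime. *)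

(* Defs.v *)
(* A 2-structure sigma is given by a vertex type
   T (V(sigma) = all of T) and a relation R a b c d meaning (a,b) ==_sigma (c,d);
   only its values on pairs of distinct vertices matter, where it must be an
   equivalence relation (see [two_structure]). *)

Definition vset (T : Type) := T -> Prop.

Definition two_structure {T : Type} (R : T -> T -> T -> T -> Prop) : Prop :=
  (forall a b, a <> b -> R a b a b) /\
  (forall a b c d, a <> b -> c <> d -> R a b c d -> R c d a b) /\
  (forall a b c d e f, a <> b -> c <> d -> e <> f ->
      R a b c d -> R c d e f -> R a b e f).

Definition vsubset {T} (A B : vset T) : Prop := forall x, A x -> B x.
Definition vsetU {T} (A B : vset T) : vset T := fun x => A x \/ B x.
Definition vset1 {T} (a : T) : vset T := fun x => x = a.
Definition vset2 {T} (a b : T) : vset T := fun x => x = a \/ x = b.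
Definition vseteq {T} (A B : vset T) : Prop := forall x, A x <-> B x.
Definition vcompl {T} (A : vset T) : vset T := fun x => ~ A x.

Definition is_module {T} (R : T -> T -> T -> T -> Prop) (W M : vset T) : Prop :=
  vsubset M W /\
  forall x y v, M x -> M y -> W v -> ~ M v -> R x v y v /\ R v x v y.

Definition is_prime {T} (R : T -> T -> T -> T -> Prop) (W : vset T) : Prop :=
  (exists a b c, W a /\ W b /\ W c /\ a <> b /\ a <> c /\ b <> c) /\
  forall M, is_module R W M ->
    vseteq M (fun _ => False) \/ vseteq M W \/ exists a, vseteq M (vset1 a).

Definition Ext {T} R (X : vset T) : vset T :=
  fun v => ~ X v /\ is_prime R (vsetU X (vset1 v)).

Definition Inside {T} R (X : vset T) : vset T :=
  fun v => ~ X v /\ is_module R (vsetU X (vset1 v)) X.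

Definition Xalpha {T} R (X : vset T) (alpha : T) : vset T :=
  fun v => ~ X v /\ is_module R (vsetU X (vset1 v)) (vset2 alpha v).

Definition is_class {T} (R : T -> T -> T -> T -> Prop) (e : T -> T -> Prop) : Prop :=
  exists a b, a <> b /\ forall x y, e x y <-> (x <> y /\ R x y a b).

(* <X>^{(e,f)}_sigma  ("for any alpha in X"; read as for every alpha in X) *)
Definition Inside_ef {T} R (X : vset T) (e f : T -> T -> Prop) : vset T :=
  fun v => Inside R X v /\ forall alpha, X alpha -> e v alpha /\ f alpha v.

Definition Xalpha_ef {T} R (X : vset T) (e f : T -> T -> Prop) (alpha : T) : vset T :=
  fun v => Xalpha R X alpha v /\ e v alpha /\ f alpha v.

Definition nonempty {T} (A : vset T) : Prop := exists x, A x.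

Definition in_p {T} R (X : vset T) (B : vset T) : Prop :=
  nonempty B /\
  (vseteq B (Ext R X) \/ vseteq B (Inside R X) \/
   exists alpha, X alpha /\ vseteq B (Xalpha R X alpha)).

Definition in_q {T} R (X : vset T) (B : vset T) : Prop :=
  nonempty B /\
  (vseteq B (Ext R X) \/
   (exists e f, is_class R e /\ is_class R f /\ vseteq B (Inside_ef R X e f)) \/
   (exists e f alpha, is_class R e /\ is_class R f /\ X alpha /\
        vseteq B (Xalpha_ef R X e f alpha))).

Definition outside_edge {T} R (X : vset T) (u w : T) : Prop :=
  ~ X u /\ ~ X w /\ u <> w /\ is_prime R (vsetU X (vset2 u w)).

Definition graph_module {T} R (X : vset T) (M : vset T) : Prop :=
  vsubset M (vcompl X) /\
  forall x y v, M x -> M y -> ~ X v -> ~ M v ->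
    (outside_edge R X x v <-> outside_edge R X y v).

(* Main.v *)
Require Import Defs.
From Stdlib Require Import Classical ClassicalEpsilon.

Definition swap {T} (x y z : T) : T :=
  if excluded_middle_informative (z = x) then y
  else if excluded_middle_informative (z = y) then x else z.

Lemma swap_x {T} (x y : T) : swap x y x = y.
Proof. unfold swap. destruct (excluded_middle_informative (x = x)); congruence. Qed.
Lemma swap_y {T} (x y : T) : swap x y y = x.
Proof. unfold swap. destruct (excluded_middle_informative (y = x)); auto.
  destruct (excluded_middle_informative (y = y)); congruence. Qed.
Lemma swap_o {T} (x y z : T) : z <> x -> z <> y -> swap x y z = z.
Proof. unfold swap. intros. destruct (excluded_middle_informative (z = x)); try congruence.
  destruct (excluded_middle_informative (z = y)); congruence. Qed.
Lemma swap_inv {T} (x y z : T) : swap x y (swap x y z) = z.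
Proof.
  destruct (classic (z = x)) as [->|Hx]. rewrite swap_x, swap_y; auto.
  destruct (classic (z = y)) as [->|Hy]. rewrite swap_y, swap_x; auto.
  rewrite (swap_o x y z); auto. rewrite swap_o; auto.
Qed.
Lemma swap_comm {T} (x y z : T) : swap y x z = swap x y z.
Proof.
  destruct (classic (z = x)) as [->|Hx].
  { destruct (classic (x = y)) as [<-|]. auto. rewrite swap_y, swap_x; auto. }
  destruct (classic (z = y)) as [->|Hy]. rewrite swap_y, swap_x; auto.
  rewrite !swap_o; auto.
Qed.

Lemma module_eq {T} R (W N N' : vset T) : is_module R W N -> vseteq N N' -> is_module R W N'.
Proof.
  intros [Hs Hm] E. split.
  - intros z Hz. apply Hs, E, Hz.
  - intros x y v Hx Hy Hv Hn. apply Hm; try apply E; auto. intro H; apply Hn, E, H.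
Qed.

Lemma module_transfer {T} R (W W' : vset T) g h N :
  two_structure R ->
  (forall z, W' z -> W (h z)) -> (forall z, W' z -> g (h z) = z) ->
  (forall p q, W p -> W q -> p <> q -> R p q (g p) (g q)) ->
  is_module R W N -> is_module R W' (fun z => W' z /\ N (h z)).
Proof.
  intros [Hrefl [Hsym Htr]] hW gh C [Hs Hm]. split.
  - intros z [? ?]; auto.
  - intros a b c [Wa Na] [Wb Nb] Wc Nc.
    assert (Nc' : ~ N (h c)) by (intro; apply Nc; auto).
    assert (hac : h a <> h c) by (intro E; rewrite E in Na; auto).
    assert (hbc : h b <> h c) by (intro E; rewrite E in Nb; auto).
    assert (ac : a <> c) by (intro E; subst; auto).
    assert (bc : b <> c) by (intro E; subst; auto).
    destruct (Hm (h a) (h b) (h c) Na Nb (hW c Wc) Nc') as [M1 M2].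
    pose proof (C (h a) (h c) (hW a Wa) (hW c Wc) hac) as Ca.
    pose proof (C (h b) (h c) (hW b Wb) (hW c Wc) hbc) as Cb.
    pose proof (C (h c) (h a) (hW c Wc) (hW a Wa) (fun e => hac (eq_sym e))) as Ca'.
    pose proof (C (h c) (h b) (hW c Wc) (hW b Wb) (fun e => hbc (eq_sym e))) as Cb'.
    rewrite !gh in Ca, Cb, Ca', Cb'; auto.
    split.
    + apply Htr with (h b) (h c); auto. apply Htr with (h a) (h c); auto.
    + apply Htr with (h c) (h b); auto.
      apply Htr with (h c) (h a); auto.
Qed.

Lemma prime_transfer {T} R (W W' : vset T) g h :
  two_structure R ->
  (forall z, W z -> W' (g z)) -> (forall z, W' z -> W (h z)) ->
  (forall z, W z -> h (g z) = z) -> (forall z, W' z -> g (h z) = z) ->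
  (forall p q, W' p -> W' q -> p <> q -> R p q (h p) (h q)) ->
  is_prime R W -> is_prime R W'.
Proof.
  intros HR gW hW hg gh C [[a [b [c (Wa & Wb & Wc & ab & ac & bc)]]] HP]. split.
  - exists (g a), (g b), (g c). repeat split; auto.
    + intro E. apply ab. rewrite <- (hg a), <- (hg b), E; auto.
    + intro E. apply ac. rewrite <- (hg a), <- (hg c), E; auto.
    + intro E. apply bc. rewrite <- (hg b), <- (hg c), E; auto.
  - intros N HN.
    pose proof (module_transfer R W' W h g N HR gW hg C HN) as HN'.
    pose proof (proj1 HN) as Hs.
    destruct (HP _ HN') as [E | [E | [s E]]].
    + left. intro z; split; [|tauto]. intro Nz. apply (E (h z)). split.
      apply hW, Hs, Nz. rewrite gh; auto.
    + right; left. intro z; split. apply Hs. intro Wz.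
      destruct (proj2 (E (h z)) (hW z Wz)) as [_ H]. rewrite gh in H; auto.
    + right; right. exists (g s). intro z; split.
      * intro Nz. assert (Hz : W (h z) /\ N (g (h z))) by (split; [apply hW, Hs, Nz| rewrite gh; auto]).
        apply E in Hz. unfold vset1 in *. rewrite <- Hz, gh; auto.
      * intro Hz; unfold vset1 in Hz; subst. assert (H : vset1 s s) by reflexivity.
        apply E in H. tauto.
Qed.

Lemma compat {T} R (M W : vset T) x y :
  two_structure R -> is_module R (fun _ => True) M -> M x -> M y ->
  (forall w, W w -> w = x \/ ~ M w) ->
  forall p q, W p -> W q -> p <> q -> R p q (swap x y p) (swap x y q).
Proof.
  intros [Hrefl _] [_ Hm] Mx My HW p q Wp Wq pq.
  destruct (HW p Wp) as [->|Np].
  - destruct (HW q Wq) as [->|Nq]. congruence.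
    assert (q <> y) by (intro; subst; auto).
    rewrite swap_x, swap_o; auto. apply (Hm x y q); auto.
  - assert (p <> y) by (intro; subst; auto).
    assert (p <> x) by (intro; subst; auto).
    rewrite (swap_o x y p); auto.
    destruct (HW q Wq) as [->|Nq].
    + rewrite swap_x. apply (Hm x y p); auto.
    + assert (q <> y) by (intro; subst; auto).
      assert (q <> x) by (intro; subst; auto).
      rewrite swap_o; auto.
Qed.

Lemma decomp {T} R (X : vset T) v :
  two_structure R -> is_prime R X -> ~ X v -> ~ is_prime R (vsetU X (vset1 v)) ->
  Inside R X v \/ exists a, X a /\ Xalpha R X a v.
Proof.
  intros HR [[a [b [c Habc]]] HX] Hv Hnp.
  apply NNPP; intro Hno. apply Hnp. split.
  { exists a, b, c. unfold vsetU. tauto. }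
  intros N HN. pose proof HN as [HNs HNm].
  assert (HNX: is_module R X (fun z => X z /\ N z)).
  { split. intros z [? ?]; auto. intros x y w [Xx Nx] [Xy Ny] Xw Nw.
    apply HNm; auto. left; auto. }
  destruct (HX _ HNX) as [E | [E | [a0 E]]].
  - destruct (classic (N v)) as [Nv|Nv].
    + right; right; exists v. intro z; split.
      * intro Nz. destruct (HNs z Nz) as [Xz|Hz]. exfalso; apply (E z); auto. exact Hz.
      * intro Hz; unfold vset1 in Hz; subst; auto.
    + left. intro z; split; [intro Nz | tauto].
      destruct (HNs z Nz) as [Xz|Hz]. apply (E z); auto. unfold vset1 in Hz; subst; contradiction.
  - destruct (classic (N v)) as [Nv|Nv].
    + right; left. intro z; split. apply HNs. intros [Xz|Hz].
      apply (proj2 (E z) Xz). unfold vset1 in Hz; subst; auto.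
    + exfalso; apply Hno; left. split; auto. apply (module_eq R _ N); auto.
      intro z; split.
      * intro Nz. destruct (HNs z Nz) as [Xz|Hz]; auto. unfold vset1 in Hz; subst; contradiction.
      * intro Xz. apply (proj2 (E z) Xz).
  - assert (Ha0 : X a0 /\ N a0) by (apply E; reflexivity).
    destruct (classic (N v)) as [Nv|Nv].
    + exfalso; apply Hno; right; exists a0. split. tauto. split; auto.
      apply (module_eq R _ N); auto. intro z; split.
      * intro Nz. destruct (HNs z Nz) as [Xz|Hz]. left. apply E; auto. right; exact Hz.
      * intros [->| ->]; tauto.
    + right; right; exists a0. intro z; split.
      * intro Nz. destruct (HNs z Nz) as [Xz|Hz]. apply E; auto. unfold vset1 in Hz; subst; contradiction.
      * intro Hz; unfold vset1 in Hz; subst; tauto.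
Qed.

Lemma inside_transfer {T} R (X M : vset T) m m' :
  two_structure R -> ~ X m -> ~ X m' ->
  (forall w, X w -> R m w m' w /\ R w m w m') ->
  forall N N', is_module R (vsetU X (vset1 m)) N ->
  vseteq (fun z => vsetU X (vset1 m') z /\ N (swap m m' z)) N' ->
  is_module R (vsetU X (vset1 m')) N'.
Proof.
  intros HR Xm Xm' H N N' HN E. eapply module_eq; [|exact E].
  apply (module_transfer R (vsetU X (vset1 m)) _ (swap m m') (swap m m')); auto.
  - intros z [Xz|Hz]. left. rewrite swap_o; auto; intro; subst; auto.
    unfold vset1 in Hz; subst. right. rewrite swap_y. reflexivity.
  - intros; apply swap_inv.
  - intros p q [Xp|Hp] [Xq|Hq] pq; unfold vset1 in *.
    + rewrite !swap_o; try (intro; subst; auto; fail). apply (proj1 HR); auto.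
    + subst. rewrite swap_x, swap_o; try (intro; subst; auto; fail). apply H; auto.
    + subst. rewrite swap_x, swap_o; try (intro; subst; auto; fail). apply H; auto.
    + subst; congruence.
Qed.

Lemma blocks {T} R (X M : vset T) m :
  two_structure R -> is_prime R X ->
  (forall v, ~ X v -> ~ is_prime R (vsetU X (vset1 v))) ->
  vsubset M (vcompl X) -> is_module R (fun _ => True) M -> ~ X m ->
  (forall m' w, M m' -> X w -> R m w m' w /\ R w m w m') ->
  exists Bp Bq, in_p R X Bp /\ in_q R X Bq /\
    vsubset M Bq /\ vsubset Bq Bp /\ is_module R Bp M.
Proof.
  intros HR HX S1 HMX HM Xm Hmm.
  pose proof HR as [Hrefl [Hsym Htr]].
  assert (Hmod : forall Bp, vsubset M Bp -> is_module R Bp M).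
  { intros Bp HB. split; auto. intros x y v Mx My _ Nv. apply HM; auto. }
  destruct (decomp R X m HR HX Xm (S1 m Xm)) as [Hin | [a [Xa Hxa]]].
  - destruct HX as [[a0 [b0 [c0 (Xa0 & _)]]] _].
    set (e := fun x y => x <> y /\ R x y m a0).
    set (f := fun x y => x <> y /\ R x y a0 m).
    assert (Hc : forall m', M m' -> Inside_ef R X e f m').
    { intros m' Mm'. assert (Xm' : ~ X m') by (apply HMX; auto).
      split.
      - split; auto. apply (inside_transfer R X M m m' HR Xm Xm' (fun w Xw => Hmm m' w Mm' Xw) X); auto.
        apply Hin. intro z; split.
        + intros [[Xz|Hz] Xs]; auto. unfold vset1 in Hz; subst. rewrite swap_y in Xs. contradiction.
        + intro Xz. split. left; auto. rewrite swap_o; auto; intro; subst; auto.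
      - intros al Xal. assert (mal : m' <> al) by (intro; subst; auto).
        assert (mal0 : m <> al) by (intro; subst; auto).
        assert (ma0 : m <> a0) by (intro; subst; auto).
        destruct (proj2 (proj2 Hin) al a0 m Xal Xa0 (or_intror eq_refl) Xm) as [I1 I2].
        destruct (Hmm m' al Mm' Xal) as [H1 H2].
        split; split; auto.
        + apply Htr with m al; auto.
        + apply Htr with al m; auto. }
    assert (Hce : is_class R e) by (exists m, a0; split; [intro; subst; auto | intros; unfold e; tauto]).
    assert (Hcf : is_class R f) by (exists a0, m; split; [intro; subst; auto | intros; unfold f; tauto]).
    assert (Hc0 : Inside_ef R X e f m).
    { split; auto. intros al Xal.
      assert (mal0 : m <> al) by (intro; subst; auto).
      destruct (proj2 (proj2 Hin) al a0 m Xal Xa0 (or_intror eq_refl) Xm) as [I1 I2].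
      split; split; auto. }
    exists (Inside R X), (Inside_ef R X e f). split; [|split; [|split; [|split]]].
    + split. exists m; auto. right; left; intro; tauto.
    + split. exists m; auto. right; left. exists e, f. split; auto. split; auto. intro; tauto.
    + intros z Mz; auto.
    + intros z [? ?]; auto.
    + apply Hmod. intros z Mz; apply Hc; auto.
  - set (e := fun x y => x <> y /\ R x y m a).
    set (f := fun x y => x <> y /\ R x y a m).
    assert (ma : m <> a) by (intro; subst; auto).
    assert (Hc : forall m', M m' -> Xalpha_ef R X e f a m').
    { intros m' Mm'. assert (Xm' : ~ X m') by (apply HMX; auto).
      assert (mal : m' <> a) by (intro; subst; auto).
      destruct (Hmm m' a Mm' Xa) as [H1 H2].
      split; [|split; split; auto].
      split; auto. apply (inside_transfer R X M m m' HR Xm Xm' (fun w Xw => Hmm m' w Mm' Xw) (vset2 a m)); auto.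
      apply Hxa. intro z; split.
      + intros [[Xz|Hz] Hs]; unfold vset1, vset2 in *.
        * rewrite swap_o in Hs; [ | intro; subst; auto | intro; subst; auto].
          destruct Hs; subst; auto. contradiction.
        * subst; auto.
      + unfold vset2. intros [->| ->]; split.
        * left; auto.
        * left. apply swap_o; intro; subst; auto.
        * right; reflexivity.
        * right; apply swap_y. }
    assert (Hce : is_class R e) by (exists m, a; split; auto; intros; unfold e; tauto).
    assert (Hcf : is_class R f) by (exists a, m; split; auto; intros; unfold f; tauto).
    assert (Hc0 : Xalpha_ef R X e f a m).
    { split; auto. split; split; auto. }
    exists (Xalpha R X a), (Xalpha_ef R X e f a). split; [|split; [|split; [|split]]].
    + split. exists m; auto. right; right. exists a; split; auto; intro; tauto.
    + split. exists m; auto. right; right. exists e, f, a. split; [exact Hce|split; [exact Hcf|split; [exact Xa|]]]. intro; tauto.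
    + intros z Mz; auto.
    + intros z [? ?]; auto.
    + apply Hmod. intros z Mz; apply Hc; auto.
Qed.

Lemma edge_transfer {T} R (X M : vset T) x y v :
  two_structure R -> vsubset M (vcompl X) -> is_module R (fun _ => True) M ->
  M x -> M y -> ~ X v -> ~ M v ->
  outside_edge R X x v -> outside_edge R X y v.
Proof.
  intros HR HMX HM Mx My Xv Mv (Xx & _ & xv & HP).
  assert (Xy : ~ X y) by (apply HMX; auto).
  assert (yv : y <> v) by (intro; subst; auto).
  split; [auto|split; [auto|split; [auto|]]].
  apply (prime_transfer R (vsetU X (vset2 x v)) (vsetU X (vset2 y v)) (swap x y) (swap x y) HR); auto.
  - intros z [Xz|[Hz|Hz]].
    + left. rewrite swap_o; auto; intro; subst; auto.
    + subst. right; left. apply swap_x.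
    + subst. right; right. apply swap_o; intro; subst; auto.
  - intros z [Xz|[Hz|Hz]].
    + left. rewrite swap_o; auto; intro; subst; auto.
    + subst. right; left. apply swap_y.
    + subst. right; right. apply swap_o; intro; subst; auto.
  - intros; apply swap_inv.
  - intros; apply swap_inv.
  - intros p q Wp Wq pq. rewrite <- (swap_comm x y p), <- (swap_comm x y q).
    apply (compat R M (vsetU X (vset2 y v))); auto.
    intros w [Xw|[Hw|Hw]]; subst; auto.
    right; intro Mw; apply (HMX w Mw Xw).
Qed.

Theorem lemma2p5 (T : Type) (R : T -> T -> T -> T -> Prop) (X M : vset T) :
  two_structure R ->
  (exists v, ~ X v) ->
  is_prime R X ->
  (forall v, ~ X v -> ~ is_prime R (vsetU X (vset1 v))) ->
  vsubset M (vcompl X) ->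
  is_module R (fun _ => True) M ->
  graph_module R X M /\
  exists Bp Bq, in_p R X Bp /\ in_q R X Bq /\
    vsubset M Bq /\ vsubset Bq Bp /\ is_module R Bp M.
Proof.
  intros HR [v0 Xv0] HX S1 HMX HM. split.
  - split; auto. intros x y v Mx My Xv Mv. split; apply edge_transfer with M; auto.
  - destruct (classic (exists m, M m)) as [[m Mm]|Hn].
    + apply (blocks R X M m); auto. apply HMX; auto.
      intros m' w Mm' Xw. assert (~ M w) by (intro Mw; apply (HMX w Mw Xw)).
      apply (proj2 HM m m' w); auto.
    + apply (blocks R X M v0); auto. intros m' w Mm'. exfalso; apply Hn; eauto.
Qed.
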